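(* Let $n$ be a prime and $k$ an integer with $2\le k<n/2$. Let $\underline{g}=[g_1,\dots,g_k]\in\underline{\mathbf{G}}_{\mathrm{tot}}$. For $p=0,1,\dots,n-1$ put $v_p=1+p\,g_1 \pmod n$ and let $\mathcal{E}_p$ be the set of entries of the vector $\underline{r}_{\underline{g}}+p\,g_1\cdot\underline{1}\pmod n$. Then $(v_0,\mathcal{E}_0,v_1,\mathcal{E}_1,\dots,v_{n-1},\mathcal{E}_{n-1},v_0)$ is a Hamiltonian (Berge) cycle of the complete $k$-uniform hypergraph $K_n^k$ on vertex set $[n]$: the vertices $v_0,\dots,v_{n-1}$ are exactly the elements of $[n]$, each listed once; the $\mathcal{E}_p$ are $n$ pairwise distinct $k$-subsets of $[n]$; and $\{v_p,v_{p+1}\}\subseteq\mathcal{E}_p$ for every $p$ (indices mod $n$). Moreover $\{\mathcal{E}_0,\dots,\mathcal{E}_{n-1}\}$ is exactly the set of underlying sets of the elements of $\underline{\mathbf{C}}_{\underline{g}}$.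
   Context: $[n]=\{1,\dots,n\}$; reduction mod $n$ is entrywise with representatives in $[n]$, and $\underline{1}$ is the all-ones vector of length $k$. For an integer vector $\underline{g}=[g_1,\dots,g_k]$ with $g_i\ge1$ for $i\in[k-1]$ and $g_1+\dots+g_{k-1}\le n-1$, the representative vector is $\underline{r}_{\underline{g}}=[1,1+g_1,1+g_1+g_2,\dots,1+g_1+\cdots+g_{k-1}]$ and $\underline{\mathbf{C}}_{\underline{g}}=\{\underline{r}_{\underline{g}}+p\cdot\underline{1}\ (\mathrm{mod}\ n):p=0,\dots,n-1\}$. The generator set: let $\sigma_{\min}=k-1$ and $\sigma_{\max}=n-\lceil n/k\rceil$. For $\sigma\in[\sigma_{\min},\sigma_{\max}]$ let $\underline{\mathbf{S}}_\sigma=\{[c_1,\dots,c_{k-1}]\in\mathbb{Z}^{k-1}:\sum_i c_i=\sigma,\ 1\le c_i\le n-\sigma\}$ and $\underline{\mathbf{G}}_\sigma=\{[c_1,\dots,c_{k-1},m]:[c_1,\dots,c_{k-1}]\in\underline{\mathbf{S}}_\sigma\}$ where $m=-\sigma$ if $\sigma\le\lfloor n/2\rfloor$ and $m=n-\sigma$ otherwise. Finally $\underline{\mathbf{G}}_{\mathrm{tot}}=\bigcup_{\sigma=\sigma_{\min}}^{\sigma_{\max}}\underline{\mathbf{G}}_\sigma$. The complete $k$-uniform hypergraph $K_n^k$ has vertex set $[n]$ and every $k$-subset of $[n]$ as a hyperedge. A (Berge) Hamiltonian cycle is a sequence $(v_1,\mathcal{E}_1,v_2,\dots,v_n,\mathcal{E}_n,v_1)$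 with $v_1,\dots,v_n$ a permutation of $[n]$, $\mathcal{E}_1,\dots,\mathcal{E}_n$ distinct hyperedges, and $v_i,v_{i+1}\in\mathcal{E}_i$ (indices mod $n$). *)

(* Defs.v *)
From mathcomp Require Import all_boot all_order all_algebra.
From mathcomp Require Export finmap.
Set Implicit Arguments. Unset Strict Implicit. Unset Printing Implicit Defensive.
Import Order.TTheory GRing.Theory Num.Theory.
Local Open Scope fset_scope.
Local Open Scope ring_scope.

(* reduction mod n with representative in [n] = {1,...,n} (for n > 0) *)
Definition redn (n : nat) (z : int) : nat :=
  let r := absz (z %% n%:Z)%Z in if r == 0%N then n else r.

Definition sigma_min (k : nat) : nat := (k - 1)%N.
Definition ceil_div (n k : nat) : nat := ((n + k - 1) %/ k)%N.
Definition sigma_max (n k : nat) : nat := (n - ceil_div n k)%N.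

Definition in_S (n k sigma : nat) (c : seq int) : Prop :=
  size c = (k - 1)%N /\ \sum_(x <- c) x = sigma%:Z /\
  all (fun x => (1 <= x) && (x <= n%:Z - sigma%:Z)) c.

Definition m_of (n sigma : nat) : int :=
  if (sigma <= n./2)%N then - sigma%:Z else n%:Z - sigma%:Z.

Definition in_G (n k sigma : nat) (g : seq int) : Prop :=
  exists2 c, in_S n k sigma c & g = rcons c (m_of n sigma).

Definition in_Gtot (n k : nat) (g : seq int) : Prop :=
  exists sigma, (sigma_min k <= sigma <= sigma_max n k)%N /\ in_G n k sigma g.

(* representative vector r_g = [1, 1+g_1, ..., 1+g_1+...+g_{k-1}]
   (g`_j is the paper's g_{j+1}) *)
Definition rep_vec (k : nat) (g : seq int) : seq int :=
  mkseq (fun i => 1 + \sum_(j < i) g`_j) k.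

Definition C_g (n k : nat) (g : seq int) : seq (seq nat) :=
  mkseq (fun p => map (fun x => redn n (x + p%:Z)) (rep_vec k g)) n.

Definition fset_of (s : seq nat) : {fset nat} := [fset x | x in s].

Definition berge_ham_cycle_Knk (n k : nat) (v : nat -> nat)
    (E : nat -> {fset nat}) : Prop :=
  perm_eq (mkseq v n) (iota 1 n) /\
  (forall p, (p < n)%N -> (E p `<=` fset_of (iota 1 n)) && (#|` E p| == k)) /\
  (forall p q, (p < n)%N -> (q < n)%N -> E p = E q -> p = q) /\
  (forall p, (p < n)%N -> (v p \in E p) && (v (p.+1 %% n)%N \in E p)).

(* Main.v *)
Require Import Defs.
From mathcomp Require Import all_boot all_order all_algebra finmap.
From mathcomp Require Import zify.
Local Open Scope fset_scope.

Lemma fset_ofE (s : seq nat) x : (x \in fset_of s) = (x \in s).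
Proof. by rewrite /fset_of inE. Qed.
Lemma card_fset_of (s : seq nat) : uniq s -> #|` fset_of s| = size s.
Proof. by move=> u; rewrite /fset_of card_fseq undup_id. Qed.

Definition rn (n x : nat) : nat := if x %% n == 0 then n else x %% n.

Lemma rn_mod n x : rn n (x %% n) = rn n x.
Proof. by rewrite /rn modn_mod. Qed.
Lemma rn_modn n x : (0 < n)%N -> rn n x %% n = x %% n.
Proof. rewrite /rn; case: eqP => [->|]; [by rewrite modnn | by rewrite modn_mod]. Qed.
Lemma rn_range n x : 0 < n -> 0 < rn n x <= n.
Proof. rewrite /rn => Hn; case: eqP => //; lia. Qed.
Lemma rn_eq n x y : x = y %[mod n] -> rn n x = rn n y.
Proof. by move=> H; rewrite -rn_mod H rn_mod. Qed.
Lemma rn_inj n x y : 0 < n -> rn n x = rn n y -> x = y %[mod n].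
Proof. by move=> Hn H; rewrite -(rn_modn n x Hn) H rn_modn. Qed.

Arguments rn_inj {n x y}.
Arguments rn_range {n} x.
Arguments rn_modn {n} x.

Lemma cancel_mod n c p q : prime n -> p < n -> q < n -> ~~ (n %| c) ->
  p * c = q * c %[mod n] -> p = q.
Proof.
move=> Pn.
wlog le: p q / q <= p.
  move=> W Hp Hq Hc H; case: (leqP q p) => h; first exact: W.
  by symmetry; apply: W => //; exact: ltnW.
move=> Hp Hq Hc /eqP; rewrite eqn_mod_dvd ?leq_mul2r ?le ?orbT // -mulnBl.
rewrite Euclid_dvdM // (negbTE Hc) orbF => Hd.
case: (posnP (p - q)) => h; first lia.
have := dvdn_leq h Hd; lia.
Qed.

Arguments cancel_mod {n c p q}.
Definition T n k (sn : nat -> nat) t := fset_of (mkseq (fun i => rn n (1 + sn i + t)) k).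

Lemma T_eq n k sn s t : s = t %[mod n] -> T n k sn s = T n k sn t.
Proof.
move=> H; rewrite /T; congr fset_of; apply: eq_mkseq => i; apply: rn_eq.
by rewrite -modnDmr H modnDmr.
Qed.

Lemma core n k gn (sn : nat -> nat) (v : nat -> nat) (E : nat -> {fset nat}) :
  prime n -> 2 <= k -> k < n -> sn 0 = 0 -> sn 1 = gn -> 0 < gn < n ->
  (forall i j, i < k -> j < k -> sn i = sn j %[mod n] -> i = j) ->
  (forall p, v p = rn n (1 + p * gn)) -> (forall p, E p = T n k sn (p * gn)) ->
  berge_ham_cycle_Knk n k v E /\
  [fset E p | p in iota 0 n] = [fset T n k sn p | p in iota 0 n].
Proof.
move=> Pn Hk Hkn s0 s1 Hg Hs hv hE.
have n0 : 0 < n by exact: prime_gt0.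
have ng : ~~ (n %| gn) by rewrite gtnNdvd //; lia.
have uT t : uniq (mkseq (fun i => rn n (1 + sn i + t)) k).
  rewrite /mkseq map_inj_in_uniq ?iota_uniq // => i j; rewrite !mem_iota => Hi Hj H.
  apply: Hs; try lia.
  move/(rn_inj n0): H => /eqP; rewrite eqn_modDr eqn_modDl => /eqP //.
have uv : uniq (mkseq v n).
  rewrite /mkseq map_inj_in_uniq ?iota_uniq // => p q; rewrite !mem_iota => Hp Hq.
  rewrite !hv => /(rn_inj n0) /eqP; rewrite eqn_modDl => /eqP H.
  apply: (cancel_mod Pn _ _ ng H); lia.
have pv : perm_eq (mkseq v n) (iota 1 n).
  apply: uniq_perm => //; first exact: iota_uniq.
  have sub : {subset mkseq v n <= iota 1 n}.
    move=> x /mapP [p _ ->]; rewrite hv mem_iota; have := rn_range (1 + p * gn) n0; lia.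
  have sz : size (iota 1 n) <= size (mkseq v n) by rewrite size_mkseq size_iota.
  exact: (uniq_min_size uv sub sz).2.
have inv p : p < n -> exists2 q, q < n & q * gn = p %[mod n].
  move=> Hp; have : rn n (1 + p) \in mkseq v n.
    by rewrite (perm_mem pv) mem_iota; have := rn_range (1 + p) n0; lia.
  move=> /mapP [q]; rewrite mem_iota hv => Hq /(rn_inj n0) /eqP.
  by rewrite eqn_modDl => /eqP H; exists q => //; move: Hq; rewrite /= ?add0n => /andP[].
split; last first.
  apply/fsetP => X; apply/imfsetP/imfsetP => -[p /= Hp ->].
    exists (p * gn %% n); first by rewrite /= mem_iota add0n ltn_pmod.
    by rewrite hE; apply: T_eq; rewrite modn_mod.
  move: Hp; rewrite /= mem_iota add0n => /andP[_ Hp]; have [q Hq Hqp] := inv p Hp.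
  by exists q; [rewrite /= mem_iota add0n Hq | rewrite hE; apply: T_eq].
split => //; split.
  move=> p Hp; rewrite hE /T card_fset_of // size_mkseq eqxx andbT.
  apply/fsubsetP => x; rewrite !fset_ofE => /mapP [i _ ->].
  by rewrite mem_iota; have := rn_range (1 + sn i + p * gn) n0; lia.
split.
  move=> p q Hp Hq; rewrite !hE => HT.
  have Hperm : perm_eq (mkseq (fun i => rn n (1 + sn i + p * gn)) k)
                       (mkseq (fun i => rn n (1 + sn i + q * gn)) k).
    apply: uniq_perm => // x; have := congr1 (fun A => x \in A) HT; by rewrite /T !fset_ofE.
  have Hsum t : \sum_(x <- mkseq (fun i => rn n (1 + sn i + t)) k) x =
                (\sum_(i <- iota 0 k) (1 + sn i)) + k * t %[mod n].
    rewrite /mkseq big_map -modn_summ.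
    rewrite (eq_bigr (fun i => (1 + sn i + t) %% n)); last by move=> i _; rewrite rn_modn.
    rewrite modn_summ big_split /=; congr ((_ + _) %% n).
    have -> : iota 0 k = index_iota 0 k by rewrite /index_iota subn0.
    by rewrite sum_nat_const_nat subn0.
  have := perm_big _ Hperm (P := xpredT) (F := id) (op := addn) (x := 0).
  move=> /(congr1 (modn^~ n)); rewrite !Hsum => /eqP; rewrite eqn_modDl => /eqP H.
  apply: (cancel_mod Pn Hp Hq (c := k * gn)).
    by rewrite Euclid_dvdM // negb_or ng andbT gtnNdvd // ltnW.
  by rewrite mulnCA [q * _]mulnCA.
move=> p Hp; rewrite hE /T !fset_ofE; apply/andP; split; apply/mapP.
  by exists 0; [rewrite mem_iota add0n (ltnW Hk) | rewrite hv s0 addn0].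
exists 1; [by rewrite mem_iota add0n Hk | rewrite hv s1; apply: rn_eq].
by rewrite -modnDmr modnMml modnDmr mulSn addnA.
Qed.

Import Order.TTheory GRing.Theory Num.Theory.

Lemma rednE n x : redn n (Posz x) = rn n x.
Proof. by rewrite /redn /rn modz_nat. Qed.

Lemma redn_lin n a b c : redn n (Posz a + Posz b * Posz c)%R = rn n (a + b * c).
Proof. by rewrite -PoszM -PoszD rednE. Qed.

Local Open Scope ring_scope.

Theorem lemma1 (n k : nat) (g : seq int) :
  prime n -> (2 <= k)%N -> (k.*2 < n)%N -> in_Gtot n k g ->
  let g1 := g`_0 in
  let v := fun p : nat => redn n (1 + p%:Z * g1) in
  let E := fun p : nat =>
    fset_of (map (fun x => redn n (x + p%:Z * g1)) (rep_vec k g)) in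
  berge_ham_cycle_Knk n k v E /\
  [fset E p | p in iota 0 n] = [fset fset_of c | c in C_g n k g].
Proof.
move=> Pn Hk Hkn [sg [/andP [Hs1 Hs2] [c [Hsz [Hsum Hall]] Hg]]].
cbv zeta.
have n0 : (0 < n)%N by exact: prime_gt0.
have Hkn2 : (k < n)%N by move: Hkn; rewrite -addnn; lia.
set cn := fun j : nat => maxn 1 (absz (nth 0%R c j)).
set sn := fun i => (\sum_(j < i) cn j)%N.
have hc j : (j < k - 1)%N -> c`_j = Posz (cn j) /\ c`_j <= n%:Z - sg%:Z.
  move=> Hj; have : c`_j \in c by apply: mem_nth; rewrite Hsz.
  move/(allP Hall) => /andP [h1 h2].
  have e : Posz (absz c`_j) = c`_j by rewrite gez0_abs //; apply: le_trans h1.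
  have a1 : (1 <= absz (nth 0%R c j))%N by rewrite -lez_nat e.
  by split => //; rewrite /cn (maxn_idPr a1) e.
have sS i : sn i.+1 = (sn i + cn i)%N by rewrite /sn big_ord_recr.
have inc : {homo sn : i j / (i < j)%N >-> (i < j)%N}.
  apply: homo_ltn; first by move=> ? ? ?; apply: ltn_trans.
  by move=> i; rewrite sS -addn1 leq_add2l leq_maxl.
have incw : {homo sn : i j / (i <= j)%N >-> (i <= j)%N}.
  by move=> i j; rewrite leq_eqVlt => /orP [/eqP -> // | /inc /ltnW].
have s0 : sn 0 = 0%N by rewrite /sn big_ord0.
have s1 : sn 1 = cn 0 by rewrite /sn big_ord1.
have ssg : sn (k - 1)%N = sg.
  apply/eqP; rewrite -eqz_nat -Hsum (big_nth 0) big_mkord Hsz /sn.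
  rewrite (big_morph Posz PoszD (erefl (Posz 0))); apply/eqP/eq_bigr => j _.
  by rewrite (hc j (ltn_ord j)).1.
have sgn : (sg < n)%N.
  move: Hs2; rewrite /sigma_max /ceil_div.
  have : (0 < (n + k - 1) %/ k)%N by rewrite divn_gt0; lia.
  lia.
have sg1 : (1 <= sg)%N by move: Hs1; rewrite /sigma_min; lia.
have k1 : (0 < k - 1)%N by lia.
have [hc0 hc0'] := hc 0%N k1.
have Hgn : (0 < cn 0 < n)%N.
  rewrite /cn leq_maxl /=; move: hc0'; rewrite hc0 /cn; lia.
have Hs i j : (i < k)%N -> (j < k)%N -> sn i = sn j %[mod n] -> i = j.
  move=> Hi Hj; have bi : (sn i < n)%N.
    by apply: leq_ltn_trans sgn; rewrite -ssg; apply: incw; lia.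
  have bj : (sn j < n)%N.
    by apply: leq_ltn_trans sgn; rewrite -ssg; apply: incw; lia.
  rewrite !modn_small // => e.
  case: (ltngtP i j) => // h; have := inc _ _ h; rewrite e ltnn //.
have Hrep : rep_vec k g = mkseq (fun i => Posz (1 + sn i)) k.
  rewrite /rep_vec /mkseq; apply/eq_in_map => i; rewrite mem_iota add0n => /andP [_ Hi].
  rewrite PoszD /sn (big_morph Posz PoszD (erefl (Posz 0))); congr (_ + _).
  apply: eq_bigr => j _; rewrite Hg nth_rcons Hsz.
  have Hj : (j < k - 1)%N by have := ltn_ord j; lia.
  by rewrite Hj (hc j Hj).1.
have Hg0 : g`_0 = Posz (cn 0) by rewrite Hg nth_rcons Hsz k1.
have HT p : fset_of (map (fun x => redn n (x + Posz p * Posz (cn 0))) (rep_vec k g))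
            = T n k sn (p * cn 0).
  rewrite Hrep /T /mkseq -map_comp; congr fset_of; apply: eq_map => i /=.
  by rewrite -PoszM -PoszD rednE.
have HC p : fset_of (map (fun x => redn n (x + Posz p)) (rep_vec k g)) = T n k sn p.
  rewrite Hrep /T /mkseq -map_comp; congr fset_of; apply: eq_map => i /=.
  by rewrite -PoszD rednE.
rewrite Hg0.
have [A B] := @core n k (cn 0) sn (fun p => redn n (1 + p%:Z * Posz (cn 0)))
  (fun p => fset_of (map (fun x => redn n (x + p%:Z * Posz (cn 0))) (rep_vec k g)))
  Pn Hk Hkn2 s0 s1 Hgn Hs (fun p => redn_lin n 1 p (cn 0)) HT.
split => //; rewrite B.
apply/fsetP => X; apply/imfsetP/imfsetP => -[x /= Hx ->].
  exists (map (fun y => redn n (y + Posz x)) (rep_vec k g)); last by rewrite HC.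
  by rewrite /C_g; apply: map_f.
move: Hx; rewrite /C_g => /mapP [p Hp ->]; exists p => //; by rewrite HC.
Qed.
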